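(* Let $(B,D,d,\theta)$ be a crossed module, $A$ an abelian group and $\zeta:\operatorname{Ker}d\to A$ a surjective abstract $\zeta$-kernel. If $\zeta$-extensions of co-type $B\xrightarrow{d}D$ exist, then there is a bijection $$\operatorname{Ext}_{B\to D}(D,A,\zeta)\;\leftrightarrow\;H^2(\operatorname{Coker}d,A),$$ where $\operatorname{Coker}d$ acts trivially on $A$.
   Context: A crossed module $(B,D,d,\theta)$: groups $B,D$, homomorphisms $d:B\to D$, $\theta:D\to\operatorname{Aut}B$ with $\theta_{d(b)}(b')=bb'b^{-1}$ and $d(\theta_x(b))=x\,d(b)\,x^{-1}$; $\operatorname{Coker}d=D/d(B)$. An abstract $\zeta$-kernel: a homomorphism $\zeta:\operatorname{Ker}d\to A$ ($A$ abelian) with $\zeta(\theta_x(c))=\zeta(c)$ for all $x\in D$, $c\in\operatorname{Ker}d$. A $\zeta$-extension of co-type $B\xrightarrow{d}D$: an exact sequence of groups $0\to A\xrightarrow{j}E\xrightarrow{p}D\to1$ with $j(A)\subseteq Z(E)$, together with a homomorphism $\beta:B\to E$ such that $p\beta=d$, $\beta(\theta_x b)=e\,\beta(b)\,e^{-1}$ whenever $p(e)=x$, and $j(\zeta(c))=\beta(c)$ for all $c\in\operatorname{Ker}d$. Two such extensions $(E,j,p,\beta)$ and $(E',j',p',\beta')$ are equivalent if there is a group isomorphism $\omega:E\to E'$ with $\omega j=j'$, $p'\omega=p$ and $\omega\beta=\beta'$. $\operatorname{Ext}_{B\to D}(D,A,\zeta)$ is the set of equivalence classes of $\zeta$-extensions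 of co-type $B\xrightarrow{d}D$. *)

(* Defs.v *)
Set Implicit Arguments.
Unset Strict Implicit.

Record group := Group {
  carrier :> Type;
  gmul : carrier -> carrier -> carrier;
  gone : carrier;
  ginv : carrier -> carrier;
  gmulA : forall x y z, gmul x (gmul y z) = gmul (gmul x y) z;
  gmul1l : forall x, gmul gone x = x;
  gmul1r : forall x, gmul x gone = x;
  gmulVl : forall x, gmul (ginv x) x = gone;
  gmulVr : forall x, gmul x (ginv x) = gone }.

Arguments gmul {g} _ _.
Arguments gone {g}.
Arguments ginv {g} _.

Definition abelian (G : group) : Prop := forall x y : G, gmul x y = gmul y x.

Definition is_hom (G H : group) (f : G -> H) : Prop :=
  forall x y : G, f (gmul x y) = gmul (f x) (f y).

Definition injective {X Y : Type} (f : X -> Y) : Prop :=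
  forall x y, f x = f y -> x = y.
Definition surjective {X Y : Type} (f : X -> Y) : Prop :=
  forall y, exists x, f x = y.
Definition bijective {X Y : Type} (f : X -> Y) : Prop :=
  injective f /\ surjective f.

Definition action_by_auts (B D : group) (theta : D -> B -> B) : Prop :=
  (forall x : D, is_hom (theta x) /\ bijective (theta x)) /\
  (forall (x y : D) (b : B), theta (gmul x y) b = theta x (theta y b)).

Definition crossed_module (B D : group) (d : B -> D) (theta : D -> B -> B) : Prop :=
  is_hom d /\ action_by_auts theta /\
  (forall b b' : B, theta (d b) b' = gmul (gmul b b') (ginv b)) /\
  (forall (x : D) (b : B), d (theta x b) = gmul (gmul x (d b)) (ginv x)).

Definition in_ker (B D : group) (d : B -> D) (c : B) : Prop := d c = gone.

(* An abstract zeta-kernel Ker d -> A.  zeta is given as a function on B,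
   only its restriction to Ker d is ever used. *)
Definition zeta_kernel (B D A : group) (d : B -> D) (theta : D -> B -> B)
    (zeta : B -> A) : Prop :=
  abelian A /\
  (forall c c', in_ker d c -> in_ker d c' -> zeta (gmul c c') = gmul (zeta c) (zeta c')) /\
  (forall (x : D) c, in_ker d c -> zeta (theta x c) = zeta c).

Definition zeta_surjective (B D A : group) (d : B -> D) (zeta : B -> A) : Prop :=
  forall a : A, exists c, in_ker d c /\ zeta c = a.

Definition is_cokernel (B D Q : group) (d : B -> D) (pi : D -> Q) : Prop :=
  is_hom pi /\ surjective pi /\
  (forall x : D, pi x = gone <-> exists b : B, d b = x).

Record zext (B D A : group) (d : B -> D) (theta : D -> B -> B) (zeta : B -> A) :=
  ZExt {
  ext_E : group;
  ext_j : A -> ext_E;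
  ext_p : ext_E -> D;
  ext_beta : B -> ext_E;
  ext_j_hom : is_hom ext_j;
  ext_p_hom : is_hom ext_p;
  ext_beta_hom : is_hom ext_beta;
  ext_j_inj : injective ext_j;
  ext_p_surj : surjective ext_p;
  ext_exact : forall e : ext_E, ext_p e = gone <-> exists a : A, ext_j a = e;
  ext_central : forall (a : A) (e : ext_E), gmul (ext_j a) e = gmul e (ext_j a);
  ext_pbeta : forall b : B, ext_p (ext_beta b) = d b;
  ext_beta_equiv : forall (b : B) (e : ext_E),
      ext_beta (theta (ext_p e) b) = gmul (gmul e (ext_beta b)) (ginv e);
  ext_zeta : forall c : B, in_ker d c -> ext_j (zeta c) = ext_beta c }.

Arguments ext_E {B D A d theta zeta} _.
Arguments ext_j {B D A d theta zeta} _ _.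
Arguments ext_p {B D A d theta zeta} _ _.
Arguments ext_beta {B D A d theta zeta} _ _.

Definition zext_equiv (B D A : group) (d : B -> D) (theta : D -> B -> B) (zeta : B -> A)
    (X Y : zext d theta zeta) : Prop :=
  exists omega : ext_E X -> ext_E Y,
    is_hom omega /\ bijective omega /\
    (forall a, omega (ext_j X a) = ext_j Y a) /\
    (forall e, ext_p Y (omega e) = ext_p X e) /\
    (forall b, omega (ext_beta X b) = ext_beta Y b).

(* Inhomogeneous 2-cochains / cocycles / coboundaries of Q with coefficients in
   A with trivial Q-action (A abelian, written multiplicatively). *)
Definition cocycle2 (Q A : group) (f : Q -> Q -> A) : Prop :=
  forall x y z : Q,
    gmul (f y z) (f x (gmul y z)) = gmul (f (gmul x y) z) (f x y).

Definition coboundary1 (Q A : group) (h : Q -> A) (x y : Q) : A :=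
  gmul (gmul (h y) (ginv (h (gmul x y)))) (h x).

Definition cohomologous (Q A : group) (f g : Q -> Q -> A) : Prop :=
  exists h : Q -> A, forall x y : Q, f x y = gmul (g x y) (coboundary1 h x y).

(* Main.v *)
Require Import Defs.
From Stdlib Require Import ClassicalEpsilon FunctionalExtensionality.

Section GL.
Variable G : group.
Implicit Types x y z : G.
Lemma mulKV x y : gmul (gmul y x) (ginv x) = y.
Proof. rewrite <- gmulA, gmulVr, gmul1r; reflexivity. Qed.
Lemma mulVK x y : gmul (gmul y (ginv x)) x = y.
Proof. rewrite <- gmulA, gmulVl, gmul1r; reflexivity. Qed.
Lemma mulKl x y : gmul (ginv x) (gmul x y) = y.
Proof. rewrite gmulA, gmulVl, gmul1l; reflexivity. Qed.
Lemma mulKr x y : gmul x (gmul (ginv x) y) = y.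
Proof. rewrite gmulA, gmulVr, gmul1l; reflexivity. Qed.
Lemma mul_cancel_l x y z : gmul x y = gmul x z -> y = z.
Proof. intro H. rewrite <- (mulKl x y), H, mulKl; reflexivity. Qed.
Lemma mul_cancel_r x y z : gmul y x = gmul z x -> y = z.
Proof. intro H. rewrite <- (mulKV x y), H, mulKV; reflexivity. Qed.
Lemma inv_uniq x y : gmul x y = gone -> y = ginv x.
Proof. intro H. apply (mul_cancel_l x). rewrite H, gmulVr; reflexivity. Qed.
Lemma ginvK x : ginv (ginv x) = x.
Proof. symmetry; apply inv_uniq, gmulVl. Qed.
Lemma ginv1 : ginv (@gone G) = gone.
Proof. symmetry; apply inv_uniq, gmul1l. Qed.
Lemma ginvM x y : ginv (gmul x y) = gmul (ginv y) (ginv x).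
Proof. symmetry; apply inv_uniq. rewrite gmulA, mulKV, gmulVr; reflexivity. Qed.
Lemma eq_mulVr x y : gmul x (ginv y) = gone -> x = y.
Proof. intro H. rewrite <- (mulVK y x), H, gmul1l; reflexivity. Qed.
End GL.

Ltac gs := repeat (rewrite ?gmulA, ?gmul1l, ?gmul1r, ?gmulVr, ?gmulVl, ?mulKV, ?mulVK,
   ?ginvM, ?ginvK, ?ginv1).

Section Hom.
Variables (G H : group) (f : G -> H) (Hf : is_hom f).
Lemma hom1 : f gone = gone.
Proof. apply (mul_cancel_l _ (f gone)). rewrite <- Hf, !gmul1r; reflexivity. Qed.
Lemma homV x : f (ginv x) = ginv (f x).
Proof. apply inv_uniq. rewrite <- Hf, gmulVr; apply hom1. Qed.
End Hom.

Section Ab.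
Variables (A : group) (HA : abelian A).
Lemma ab_swap4 (a b c e : A) : gmul (gmul a b) (gmul c e) = gmul (gmul a c) (gmul b e).
Proof. rewrite !gmulA. f_equal. rewrite <- !gmulA. f_equal. apply HA. Qed.
Lemma ab_invM (a b : A) : ginv (gmul a b) = gmul (ginv a) (ginv b).
Proof. rewrite ginvM. apply HA. Qed.
End Ab.

Section Main.
Variables (B D A : group) (d : B -> D) (theta : D -> B -> B) (zeta : B -> A).
Hypothesis Hcm : crossed_module d theta.
Hypothesis Hzeta : zeta_kernel d theta zeta.
Hypothesis Hsurj : zeta_surjective d zeta.
Variables (Q : group) (pi : D -> Q).
Hypothesis Hcoker : is_cokernel d pi.
Variable s : Q -> D.
Hypothesis Hs : forall q, pi (s q) = q.
Variable bb : Q -> Q -> B.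
Hypothesis Hbb : forall x y, d (bb x y) = gmul (gmul (s x) (s y)) (ginv (s (gmul x y))).

Notation Z := (zext d theta zeta).

Lemma HA : abelian A. Proof. exact (proj1 Hzeta). Qed.
Lemma Hd : is_hom d. Proof. exact (proj1 Hcm). Qed.
Lemma Hpi : is_hom pi. Proof. exact (proj1 Hcoker). Qed.
Lemma pi_d b : pi (d b) = gone.
Proof. apply (proj2 (proj2 Hcoker)). exists b; reflexivity. Qed.

Section X.
Variable X : Z.
Notation E := (ext_E X).
Notation j := (ext_j X).
Notation p := (ext_p X).
Notation be := (ext_beta X).
Lemma jM a a' : j (gmul a a') = gmul (j a) (j a'). Proof. apply ext_j_hom. Qed.
Lemma pM e e' : p (gmul e e') = gmul (p e) (p e'). Proof. apply ext_p_hom. Qed.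
Lemma bM b b' : be (gmul b b') = gmul (be b) (be b'). Proof. apply ext_beta_hom. Qed.
Lemma j1 : j gone = gone. Proof. apply hom1, ext_j_hom. Qed.
Lemma jV a : j (ginv a) = ginv (j a). Proof. apply homV, ext_j_hom. Qed.
Lemma pV e : p (ginv e) = ginv (p e). Proof. apply homV, ext_p_hom. Qed.
Lemma bV b : be (ginv b) = ginv (be b). Proof. apply homV, ext_beta_hom. Qed.
Lemma pj a : p (j a) = gone. Proof. apply (proj2 (ext_exact _)). exists a; reflexivity. Qed.
Lemma jC a e : gmul e (j a) = gmul (j a) e. Proof. symmetry; apply ext_central. Qed.
Lemma pb b : p (be b) = d b. Proof. apply ext_pbeta. Qed.
Lemma conjb e b : gmul e (be b) = gmul (be (theta (p e) b)) e.
Proof. rewrite ext_beta_equiv. rewrite mulVK. reflexivity. Qed.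
Lemma jb a : exists c, in_ker d c /\ zeta c = a /\ j a = be c.
Proof. destruct (Hsurj a) as [c [Hc Hz]]. exists c. split; [exact Hc|split; [exact Hz|]].
  rewrite <- Hz. apply ext_zeta; exact Hc. Qed.
Lemma kerp e : p e = gone -> exists c, e = be c.
Proof. intro H. destruct (proj1 (ext_exact e) H) as [a Ha].
  destruct (jb a) as [c [_ [_ Hc]]]. exists c. rewrite <- Ha; exact Hc. Qed.
Lemma decomp (ek : Q -> E) (Hek : forall q, p (ek q) = s q) e :
  exists b0, e = gmul (be b0) (ek (pi (p e))).
Proof.
  set (q := pi (p e)).
  assert (H1 : pi (gmul (p e) (ginv (s q))) = gone).
  { rewrite Hpi, (homV _ _ _ Hpi), Hs. apply gmulVr. }
  destruct (proj1 (proj2 (proj2 Hcoker) _) H1) as [b' Hb'].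
  destruct (kerp (gmul (gmul (ginv (be b')) e) (ginv (ek q)))) as [c Hc].
  { rewrite !pM, !pV, pb, Hb', Hek. gs. reflexivity. }
  exists (gmul b' c). rewrite bM, <- Hc. gs. reflexivity.
Qed.
End X.

Lemma btransfer (X Y : Z) b1 b2 : ext_beta X b1 = ext_beta X b2 -> ext_beta Y b1 = ext_beta Y b2.
Proof.
  intro H. set (c := gmul b1 (ginv b2)).
  assert (H1 : ext_beta X c = gone) by (unfold c; rewrite bM, bV, H; apply gmulVr).
  assert (Hk : in_ker d c) by (unfold in_ker; rewrite <- (pb X c), H1; apply hom1; apply ext_p_hom).
  assert (Hz : zeta c = gone).
  { apply (ext_j_inj (z:=X)). rewrite ext_zeta by exact Hk. rewrite H1, j1. reflexivity. }
  assert (H2 : ext_beta Y c = gone) by (rewrite <- ext_zeta by exact Hk; rewrite Hz; apply j1).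
  unfold c in H2. rewrite bM, bV in H2. apply eq_mulVr; exact H2.
Qed.

Definition spec (X : Z) (e : Q -> ext_E X) (f : Q -> Q -> A) :=
  (forall q, ext_p X (e q) = s q) /\
  forall x y, gmul (e x) (e y) =
     gmul (gmul (ext_beta X (bb x y)) (ext_j X (f x y))) (e (gmul x y)).

Lemma spec_unique X e f1 f2 : spec X e f1 -> spec X e f2 -> forall x y, f1 x y = f2 x y.
Proof.
  intros [_ H1] [_ H2] x y. apply (ext_j_inj (z:=X)).
  apply (mul_cancel_l _ (ext_beta X (bb x y))). apply (mul_cancel_r _ (e (gmul x y))).
  rewrite <- H1, <- H2; reflexivity.
Qed.

Lemma f_exists (X : Z) (e : Q -> ext_E X) : (forall q, ext_p X (e q) = s q) -> forall x y, exists a,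
  gmul (e x) (e y) = gmul (gmul (ext_beta X (bb x y)) (ext_j X a)) (e (gmul x y)).
Proof.
  intros He x y.
  assert (Hp : ext_p X (gmul (gmul (gmul (ginv (ext_beta X (bb x y))) (e x)) (e y)) (ginv (e (gmul x y)))) = gone).
  { rewrite !pM, !pV, pb, !He, Hbb. gs. reflexivity. }
  destruct (proj1 (ext_exact _) Hp) as [a Ha]. exists a. rewrite Ha. gs. reflexivity.
Qed.

Lemma cob_mul (h : Q -> A) x y : gmul (coboundary1 h x y) (h (gmul x y)) = gmul (h x) (h y).
Proof. unfold coboundary1. rewrite (HA (gmul (h y) (ginv (h (gmul x y)))) (h x)). gs. reflexivity. Qed.

Lemma spec_shift (X : Z) e f (h : Q -> A) f' : spec X e f ->
  (forall x y, f' x y = gmul (f x y) (coboundary1 h x y)) ->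
  spec X (fun q => gmul (ext_j X (h q)) (e q)) f'.
Proof.
  intros [He Hm] Hf. split.
  - intro q. rewrite pM, pj, He. apply gmul1l.
  - intros x y. rewrite Hf.
    rewrite <- (gmulA (ext_j X (h x)) (e x)), (gmulA (e x)), (jC X (h y) (e x)), <- (gmulA (ext_j X (h y))), Hm.
    rewrite (gmulA (ext_j X (h x))), <- jM.
    rewrite gmulA, (gmulA _ (ext_j X (h (gmul x y)))).
    f_equal.
    rewrite (gmulA _ (ext_beta X _)), <- (jC X _ (ext_beta X _)), <- !gmulA, <- !jM.
    f_equal. f_equal.
    rewrite <- (gmulA (f x y)), cob_mul. apply HA.
Qed.

Lemma spec_ext (X : Z) e e' f f' : spec X e f -> (forall q, e q = e' q) ->
  (forall x y, f x y = f' x y) -> spec X e' f'.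
Proof.
  intros H He Hf. replace e' with e by (apply functional_extensionality; auto).
  replace f' with f by (apply functional_extensionality; intro; apply functional_extensionality; auto).
  exact H.
Qed.

Lemma spec_cohom (X : Z) e f e' f' : spec X e f -> spec X e' f' -> cohomologous f' f.
Proof.
  intros H H'.
  assert (Hk : forall q, exists a, ext_j X a = gmul (e' q) (ginv (e q))).
  { intro q. apply (ext_exact (z:=X)). rewrite pM, pV, (proj1 H), (proj1 H'). apply gmulVr. }
  set (h := fun q => proj1_sig (constructive_indefinite_description _ (Hk q))).
  assert (Hh : forall q, ext_j X (h q) = gmul (e' q) (ginv (e q))).
  { intro q. unfold h. destruct (constructive_indefinite_description _ (Hk q)); assumption. }
  exists h. intros x y.
  assert (H2 := spec_shift X e f h (fun x y => gmul (f x y) (coboundary1 h x y)) H (fun _ _ => eq_refl)).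
  assert (H3 : spec X e' (fun x y => gmul (f x y) (coboundary1 h x y))).
  { eapply spec_ext; [exact H2| |reflexivity]. intro q. simpl. rewrite Hh. gs. reflexivity. }
  exact (spec_unique X e' _ _ H' H3 x y).
Qed.

Definition zhom (X Y : Z) (om : ext_E X -> ext_E Y) :=
  is_hom om /\
    (forall a, om (ext_j X a) = ext_j Y a) /\
    (forall e, ext_p Y (om e) = ext_p X e) /\
    (forall b, om (ext_beta X b) = ext_beta Y b).

Lemma spec_transport (X Y : Z) om e f : zhom X Y om -> spec X e f -> spec Y (fun q => om (e q)) f.
Proof.
  intros [Hh [Hj [Hp Hb]]] [He Hm]. split.
  - intro q. rewrite Hp; apply He.
  - intros x y. rewrite <- Hh, Hm, !Hh, Hj, Hb. reflexivity.
Qed.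

Lemma prod_form (X : Z) e f b1 b2 x y c : spec X e f -> in_ker d c -> zeta c = f x y ->
  gmul (gmul (ext_beta X b1) (e x)) (gmul (ext_beta X b2) (e y)) =
  gmul (ext_beta X (gmul (gmul (gmul b1 (theta (s x) b2)) (bb x y)) c)) (e (gmul x y)).
Proof.
  intros [He Hm] Hc Hz.
  rewrite <- (gmulA (ext_beta X b1)), (gmulA (e x)), conjb, He, <- (gmulA _ (e x) (e y)), Hm.
  rewrite <- Hz, ext_zeta by exact Hc. rewrite !bM. gs. reflexivity.
Qed.

Lemma e1_beta (X : Z) e f c1 : spec X e f -> in_ker d c1 -> zeta c1 = f gone gone ->
  e gone = ext_beta X (gmul (bb gone gone) c1).
Proof.
  intros HX Hk Hz. assert (H := proj2 HX gone gone). rewrite gmul1l in H.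
  apply (mul_cancel_r _ (e gone)) in H. rewrite H, bM, <- Hz, ext_zeta by exact Hk. reflexivity.
Qed.

Lemma spec_iso (X Y : Z) eX eY f : spec X eX f -> spec Y eY f -> zext_equiv X Y.
Proof.
  intros HX HY.
  assert (Hd := fun e => decomp X eX (proj1 HX) e).
  set (b0 := fun e => proj1_sig (constructive_indefinite_description _ (Hd e))).
  assert (Hb0 : forall e, e = gmul (ext_beta X (b0 e)) (eX (pi (ext_p X e)))).
  { intro e. unfold b0. destruct (constructive_indefinite_description _ _); assumption. }
  set (om := fun e => gmul (ext_beta Y (b0 e)) (eY (pi (ext_p X e)))).
  assert (Hrepr : forall e b q, e = gmul (ext_beta X b) (eX q) -> om e = gmul (ext_beta Y b) (eY q)).
  { intros e b q He.
    assert (Hq : pi (ext_p X e) = q).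
    { rewrite He, pM, pb, (proj1 HX), Hpi, pi_d, Hs. apply gmul1l. }
    unfold om. rewrite Hq. f_equal. apply (btransfer X). apply (mul_cancel_r _ (eX q)).
    rewrite <- He, <- Hq. symmetry. apply Hb0. }
  destruct (jb X (f gone gone)) as [c1 [Hc1k [Hc1z _]]].
  assert (HuX := e1_beta X eX f c1 HX Hc1k Hc1z).
  assert (HuY := e1_beta Y eY f c1 HY Hc1k Hc1z).
  set (u := gmul (bb gone gone) c1) in *.
  exists om. split; [|split; [split|split; [|split]]].
  - intros e e'.
    set (x := pi (ext_p X e)). set (y := pi (ext_p X e')).
    destruct (jb X (f x y)) as [c [Hck [Hcz _]]].
    assert (E1 : gmul e e' = gmul (ext_beta X (gmul (gmul (gmul (b0 e) (theta (s x) (b0 e'))) (bb x y)) c)) (eX (gmul x y))).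
    { rewrite <- (prod_form X eX f (b0 e) (b0 e') x y c HX Hck Hcz). f_equal; apply Hb0. }
    rewrite (Hrepr _ _ _ E1). unfold om. fold x y.
    rewrite (prod_form Y eY f (b0 e) (b0 e') x y c HY Hck Hcz). reflexivity.
  - intros e e' H.
    assert (Hx : pi (ext_p X e) = pi (ext_p X e')).
    { apply (f_equal (fun t => pi (ext_p Y t))) in H. unfold om in H.
      rewrite !pM, !pb, !(proj1 HY), !Hpi, !pi_d, !Hs, !gmul1l in H. exact H. }
    assert (Hbe : ext_beta X (b0 e) = ext_beta X (b0 e')).
    { apply (btransfer Y). unfold om in H. rewrite Hx in H. apply (mul_cancel_r _ _ _ _ H). }
    rewrite (Hb0 e), (Hb0 e'), Hx, Hbe. reflexivity.
  - intro y'. destruct (decomp Y eY (proj1 HY) y') as [b Hb].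
    exists (gmul (ext_beta X b) (eX (pi (ext_p Y y')))). rewrite (Hrepr _ b _ eq_refl).
    symmetry; exact Hb.
  - intro a. destruct (jb X a) as [c [Hck [Hcz Hj]]]. rewrite Hj.
    rewrite (Hrepr _ (gmul c (ginv u)) gone).
    + rewrite HuY, <- bM, mulVK, <- Hcz, ext_zeta by exact Hck. reflexivity.
    + rewrite HuX, <- bM, mulVK. reflexivity.
  - intro e. unfold om. rewrite pM, pb, (proj1 HY).
    transitivity (ext_p X (gmul (ext_beta X (b0 e)) (eX (pi (ext_p X e))))).
    + rewrite pM, pb, (proj1 HX). reflexivity.
    + f_equal. symmetry. apply Hb0.
  - intro b. rewrite (Hrepr _ (gmul b (ginv u)) gone).
    + rewrite HuY, <- bM, mulVK. reflexivity.
    + rewrite HuX, <- bM, mulVK. reflexivity.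
Qed.

Lemma spec_assoc (X : Z) e f (H : spec X e f) x y z :
  gmul (ext_beta X (gmul (bb x y) (bb (gmul x y) z))) (ext_j X (gmul (f x y) (f (gmul x y) z))) =
  gmul (ext_beta X (gmul (theta (s x) (bb y z)) (bb x (gmul y z)))) (ext_j X (gmul (f y z) (f x (gmul y z)))).
Proof.
  destruct H as [He Hm].
  apply (mul_cancel_r _ (e (gmul (gmul x y) z))).
  transitivity (gmul (gmul (e x) (e y)) (e z)).
  - rewrite (Hm x y), <- (gmulA _ (e (gmul x y))), (Hm (gmul x y) z).
    rewrite !bM, !jM. gs.
    rewrite <- (gmulA (ext_beta X (bb x y)) (ext_j X (f x y)) (ext_beta X (bb (gmul x y) z))).
    rewrite <- (jC X (f x y)). gs. reflexivity.
  - rewrite <- gmulA, (Hm y z), !gmulA, conjb, He.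
    rewrite <- (gmulA (ext_beta X _) (e x) (ext_j X _)), (jC X (f y z) (e x)).
    rewrite (gmulA (ext_beta X _) (ext_j X _) (e x)), <- (gmulA _ (e x)), Hm.
    rewrite !bM, !jM. gs.
    rewrite <- (gmulA (ext_beta X (theta (s x) (bb y z))) (ext_j X (f y z))), <- (jC X (f y z)).
    gs. reflexivity.
Qed.

Lemma spec_cocycle (X0 : Z) e0 (H0 : spec X0 e0 (fun _ _ => gone)) (X : Z) e f
  (H : spec X e f) : cocycle2 f.
Proof.
  intros x y z.
  assert (A0 := spec_assoc X0 _ _ H0 x y z). cbv beta in A0.
  rewrite !gmul1l, !j1, !gmul1r in A0.
  assert (A1 := spec_assoc X e f H x y z).
  rewrite (btransfer X0 X _ _ A0) in A1. apply mul_cancel_l in A1. apply ext_j_inj in A1.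
  rewrite (HA (f (gmul x y) z)). symmetry. exact A1.
Qed.

Section Tw.
Variable X0 : Z.
Variable e0 : Q -> ext_E X0.
Hypothesis H0 : spec X0 e0 (fun _ _ => gone).
Variable g : Q -> Q -> A.
Hypothesis Hg : cocycle2 g.
Hypothesis Hg1 : forall y, g gone y = gone.
Hypothesis Hg2 : forall x, g x gone = gone.

Notation E := (ext_E X0).
Notation j := (ext_j X0).
Notation p := (ext_p X0).
Notation be := (ext_beta X0).

Definition qq (e : E) : Q := pi (p e).
Lemma qqM e e' : qq (gmul e e') = gmul (qq e) (qq e').
Proof. unfold qq. rewrite pM, Hpi. reflexivity. Qed.
Lemma qqV e : qq (ginv e) = ginv (qq e).
Proof. unfold qq. rewrite pV, (homV _ _ _ Hpi). reflexivity. Qed.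
Lemma qqj a : qq (j a) = gone.
Proof. unfold qq. rewrite pj. apply hom1, Hpi. Qed.
Lemma qqb b : qq (be b) = gone.
Proof. unfold qq. rewrite pb. apply pi_d. Qed.
Lemma qq1 : qq gone = gone.
Proof. rewrite <- (j1 X0). apply qqj. Qed.

Definition tm (e e' : E) : E := gmul (gmul e e') (j (g (qq e) (qq e'))).
Definition ti (e : E) : E := gmul (ginv e) (ginv (j (g (qq e) (ginv (qq e))))).

Lemma qq_tm e e' : qq (tm e e') = gmul (qq e) (qq e').
Proof. unfold tm. rewrite !qqM, qqj, gmul1r. reflexivity. Qed.
Lemma qq_ti e : qq (ti e) = ginv (qq e).
Proof. unfold ti. rewrite qqM, !qqV, qqj, ginv1, gmul1r. reflexivity. Qed.

Lemma gsym x : g (ginv x) x = g x (ginv x).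
Proof.
  assert (H := Hg x (ginv x) x). rewrite gmulVl, gmulVr, Hg1, Hg2, gmul1r, gmul1l in H.
  exact H.
Qed.

Lemma tassoc e e' e'' : tm e (tm e' e'') = tm (tm e e') e''.
Proof.
  unfold tm. rewrite !qqM, !qqj, !gmul1r.
  rewrite <- (gmulA (gmul e e') (j _) e''), <- (jC X0 _ e'').
  gs. rewrite <- !(gmulA _ (j _) (j _)), <- !jM. f_equal. f_equal.
  rewrite (HA (g (qq e) _)), Hg. reflexivity.
Qed.
Lemma t1l e : tm gone e = e.
Proof. unfold tm. rewrite qq1, Hg1, j1, !gmul1l, gmul1r. reflexivity. Qed.
Lemma t1r e : tm e gone = e.
Proof. unfold tm. rewrite qq1, Hg2, j1, !gmul1r. reflexivity. Qed.
Lemma tVl e : tm (ti e) e = gone.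
Proof.
  unfold tm. rewrite qq_ti, gsym. unfold ti.
  rewrite <- jV, <- (gmulA (ginv e) (j _) e), <- (jC X0 _ e).
  gs. rewrite <- jM, gmulVl, j1. reflexivity.
Qed.
Lemma tVr e : tm e (ti e) = gone.
Proof. unfold tm. rewrite qq_ti. unfold ti. gs. reflexivity. Qed.

Definition TG : group := @Group E tm gone ti tassoc t1l t1r tVl tVr.

Lemma Tj_hom : is_hom (G:=A) (H:=TG) j.
Proof. intros a a'. change (j (gmul a a') = tm (j a) (j a')). unfold tm. rewrite !qqj, Hg1, j1, gmul1r. apply jM. Qed.
Lemma Tp_hom : is_hom (G:=TG) (H:=D) p.
Proof. intros e e'. change (p (tm e e') = gmul (p e) (p e')). unfold tm. rewrite pM, pj, gmul1r. apply pM. Qed.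
Lemma Tb_hom : is_hom (G:=B) (H:=TG) be.
Proof. intros b b'. change (be (gmul b b') = tm (be b) (be b')). unfold tm. rewrite !qqb, Hg1, j1, gmul1r. apply bM. Qed.
Lemma Tcent : forall (a : A) (e : TG), @gmul TG (j a) e = @gmul TG e (j a).
Proof. intros a e. change (tm (j a) e = tm e (j a)). unfold tm. rewrite qqj, Hg1, Hg2, j1, !gmul1r. apply ext_central. Qed.
Lemma Tbeq : forall (b : B) (e : TG), be (theta (p e) b) = @gmul TG (@gmul TG e (be b)) (@ginv TG e).
Proof.
  intros b e. change (be (theta (p e) b) = tm (tm e (be b)) (ti e)). unfold tm, ti. rewrite !qqM, qqb, gmul1r, Hg2, j1, gmul1r.
  rewrite !qqV, qqj, qq1, ginv1, !gmul1r.
  gs. rewrite ext_beta_equiv. reflexivity.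
Qed.

Definition TX : Z := @ZExt B D A d theta zeta TG j p be Tj_hom Tp_hom Tb_hom
  (ext_j_inj (z:=X0)) (ext_p_surj X0) (ext_exact (z:=X0)) Tcent (ext_pbeta X0)
  Tbeq (ext_zeta X0).

Lemma TX_spec : spec TX e0 g.
Proof.
  destruct H0 as [He Hm]. split; [exact He|].
  intros x y. change (tm (e0 x) (e0 y) = tm (tm (be (bb x y)) (j (g x y))) (e0 (gmul x y))). unfold tm.
  assert (Hq : forall q, qq (e0 q) = q) by (intro q; unfold qq; rewrite He; apply Hs).
  rewrite (Hq x), (Hq y), (Hq (gmul x y)), Hm, qqb, qqj, Hg1, j1, gmul1r.
  rewrite !gmul1r, !qqM, qqb, qqj, !gmul1l, Hg1, j1, gmul1r, <- gmulA, (jC X0 (g x y) (e0 _)), gmulA. reflexivity.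
Qed.
End Tw.

Lemma cob_scale (h : Q -> A) k x y :
  coboundary1 (fun q => gmul (h q) k) x y = gmul (coboundary1 h x y) k.
Proof.
  unfold coboundary1. rewrite (ab_invM _ HA), (ab_swap4 _ HA (h y) k), gmulVr, gmul1r, gmulA. reflexivity.
Qed.

Lemma main_sec (X0 : Z) e0 (H0 : spec X0 e0 (fun _ _ => gone)) :
  exists Phi : Z -> (Q -> Q -> A),
    (forall X, cocycle2 (Phi X)) /\
    (forall X Y, zext_equiv X Y <-> cohomologous (Phi X) (Phi Y)) /\
    (forall f : Q -> Q -> A, cocycle2 f -> exists X, cohomologous f (Phi X)).
Proof.
  set (esec := fun (X : Z) q => proj1_sig (constructive_indefinite_description _ (ext_p_surj X (s q)))).
  assert (He : forall X q, ext_p X (esec X q) = s q).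
  { intros X q. unfold esec. destruct (constructive_indefinite_description _ _); assumption. }
  set (Phi := fun (X : Z) x y => proj1_sig (constructive_indefinite_description _ (f_exists X (esec X) (He X) x y))).
  assert (HPhi : forall X, spec X (esec X) (Phi X)).
  { intro X. split; [apply He|]. intros x y. unfold Phi.
    destruct (constructive_indefinite_description _ _); assumption. }
  exists Phi. split; [intro X; apply (spec_cocycle X0 e0 H0 X _ _ (HPhi X))|split].
  - intros X Y; split.
    + intros [om [Hh [_ [Hj [Hp Hb]]]]].
      apply (spec_cohom Y (esec Y) (Phi Y) (fun q => om (esec X q)) (Phi X) (HPhi Y)).
      apply spec_transport; [split; [exact Hh|split; [exact Hj|split; [exact Hp|exact Hb]]]|apply HPhi].
    + intros [h Hh].
      apply (spec_iso X Y (esec X) (fun q => gmul (ext_j Y (h q)) (esec Y q)) (Phi X) (HPhi X)).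
      apply (spec_shift Y (esec Y) (Phi Y) h (Phi X) (HPhi Y)). exact Hh.
  - intros g Hg. set (k := g gone gone).
    set (g' := fun x y => gmul (g x y) (ginv k)).
    assert (Hg' : cocycle2 g').
    { intros x y z. unfold g'. rewrite (ab_swap4 _ HA (g y z)), (ab_swap4 _ HA (g (gmul x y) z)), Hg. reflexivity. }
    assert (Hk1 : forall y, g gone y = k).
    { intro y. assert (H := Hg gone gone y). rewrite !gmul1l in H.
      apply mul_cancel_l in H. exact H. }
    assert (Hk2 : forall x, g x gone = k).
    { intro x. assert (H := Hg x gone gone). rewrite !gmul1r in H.
      fold k in H. rewrite (HA k) in H. apply mul_cancel_l in H. symmetry; exact H. }
    assert (Hg'1 : forall y, g' gone y = gone) by (intro; unfold g'; rewrite Hk1; apply gmulVr).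
    assert (Hg'2 : forall x, g' x gone = gone) by (intro; unfold g'; rewrite Hk2; apply gmulVr).
    set (T := TX X0 g' Hg' Hg'1 Hg'2).
    exists T.
    destruct (spec_cohom T (esec T) (Phi T) e0 g' (HPhi T) (TX_spec X0 e0 H0 g' Hg' Hg'1 Hg'2)) as [h Hh].
    exists (fun q => gmul (h q) k). intros x y. rewrite cob_scale, gmulA, <- Hh.
    unfold g'. rewrite mulVK. reflexivity.
Qed.
End Main.

Theorem mainTheorem6
  (B D A : group) (d : B -> D) (theta : D -> B -> B) (zeta : B -> A)
  (Hcm : crossed_module d theta)
  (Hzeta : zeta_kernel d theta zeta)
  (Hsurj : zeta_surjective d zeta)
  (Q : group) (pi : D -> Q) (Hcoker : is_cokernel d pi)
  (Hex : exists X : zext d theta zeta, True) :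
  exists Phi : zext d theta zeta -> (Q -> Q -> A),
    (forall X, cocycle2 (Phi X)) /\
    (forall X Y, zext_equiv X Y <-> cohomologous (Phi X) (Phi Y)) /\
    (forall f : Q -> Q -> A, cocycle2 f -> exists X, cohomologous f (Phi X)).
Proof.
  destruct Hex as [X0 _].
  set (s := fun q => proj1_sig (constructive_indefinite_description _ (proj1 (proj2 Hcoker) q))).
  assert (Hs : forall q, pi (s q) = q).
  { intro q. unfold s. destruct (constructive_indefinite_description _ _); assumption. }
  set (e0 := fun q => proj1_sig (constructive_indefinite_description _ (ext_p_surj X0 (s q)))).
  assert (He0 : forall q, ext_p X0 (e0 q) = s q).
  { intro q. unfold e0. destruct (constructive_indefinite_description _ _); assumption. }
  assert (Hb : forall x y, exists b, gmul (e0 x) (e0 y) =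
      gmul (gmul (ext_beta X0 b) (ext_j X0 gone)) (e0 (gmul x y))).
  { intros x y.
    destruct (decomp B D A d theta zeta Hsurj Q pi Hcoker s Hs X0 e0 He0 (gmul (e0 x) (e0 y))) as [b Hb].
    exists b. rewrite (hom1 _ _ _ (ext_j_hom X0)), gmul1r. rewrite Hb at 1. f_equal. f_equal.
    rewrite (ext_p_hom (z:=X0)), !He0, (proj1 Hcoker), !Hs. reflexivity. }
  set (bb := fun x y => proj1_sig (constructive_indefinite_description _ (Hb x y))).
  assert (Hbb0 : forall x y, gmul (e0 x) (e0 y) =
      gmul (gmul (ext_beta X0 (bb x y)) (ext_j X0 gone)) (e0 (gmul x y))).
  { intros x y. unfold bb. destruct (constructive_indefinite_description _ _); assumption. }
  assert (Hbb : forall x y, d (bb x y) = gmul (gmul (s x) (s y)) (ginv (s (gmul x y)))).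
  { intros x y. rewrite <- (ext_pbeta X0).
    assert (E : ext_beta X0 (bb x y) = gmul (gmul (e0 x) (e0 y)) (ginv (e0 (gmul x y)))).
    { rewrite Hbb0, (hom1 _ _ _ (ext_j_hom X0)), gmul1r, mulKV. reflexivity. }
    rewrite E, !(ext_p_hom (z:=X0)), (homV _ _ _ (@ext_p_hom _ _ _ _ _ _ X0)), !He0. reflexivity. }
  exact (main_sec B D A d theta zeta Hzeta Hsurj Q pi Hcoker s Hs bb Hbb X0 e0
           (conj He0 Hbb0)).
Qed.
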